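(* Assume $|V|\ge 3$. Suppose the notion of strategic manipulation is weakened by removing requirement (a) (that the manipulated profile $(\vec s_{-C},\vec s'_C)$ be legal), keeping only requirement (b). Then for every $c\ge 1$ and $f\ge 1$ there is no $(c,f)$-resilient consensus protocol under this modified notion.
   Context: Model. There are $n$ agents $\Pi=\{1,\dots,n\}$ proceeding in synchronous rounds $1,2,\dots$. In each round every agent first chooses, for each agent $j$, a message to send to $j$ or no message; then it receives the messages sent to it in that round; then it updates its local state. Channels are reliable. A failure pattern $F$ is a subset of $\{(i,j,r): i,j\in\Pi, r\ge 1\}$, where $(i,j,r)\in F$ means that $i$'s round-$r$ message to $j$ would be delivered if sent; it must satisfy: if $(i,j,r)\notin F$ then $(i,j',r')\notin F$ for all $j'$ and all $r'>r$. Agent $i$ is correct if $(i,j,r)\in F$ for all $j,r$, and faulty otherwise; a faulty agent stops acting after it crashes. In a system with at most $f$ crash failures only failure patterns with at most $f$ faulty agents occur. $V$ is a finite set of proposal values; the private type $\theta_i$ of agent $i$ is a strict total order on $V$. A (deterministic) strategy $s_i$ maps $\theta_i$ to a function from (round $r$, messages received in rounds $1..r$) to (messages to send in round $r+1$, a decision in $V\cup\{\top\}$ or $\bot$ = no decision), $\top\notin V$; each agent decides at most once. A protocol is a profile $\vec s=(s_1,\dots,s_n)$; the run $R(F,\vec\theta,\vec s)$ is determined by $F$, $\vec\theta$, $\vec s$. Legal profile: for every admissible $F$ and every $\vec\theta$: Termination (every correct agent eventually decides), Uniform Agreement (no two agents decide differently), Validity (any decision is an element of $V$ that is the most preferred value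 of some agent). Utility of $i$: $0$ if $i$ crashes in $F$; if consensus holds with decision $d$, a positive value strictly increasing in $i$'s preference for $d$; $-\infty$ if consensus is violated. Colluders $C$ may use strategies depending on all colluders' types. Original definition: $C$ can strategically manipulate a legal $\vec s$ if there is $\vec s'_C$ with (a) $(\vec s_{-C},\vec s'_C)$ legal, and (b) some admissible $F$ and some $\vec\theta$ in which all members of $C$ have the same most preferred value, such that some $i\in C$ has strictly higher utility under $(\vec s_{-C},\vec s'_C)$ than under $\vec s$. A $(c,f)$-resilient consensus protocol is a legal profile that no group of size at most $c$ can strategically manipulate, in a system with at most $f$ crash failures. *)

(* Defs.v *)
(* Model of synchronous crash-prone message passing and
   rational consensus (Halpern-Vilaca style). Rounds are 0-based internally:
   code round k corresponds to the paper's round k+1. *)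
From mathcomp Require Import all_boot all_order all_algebra.

Set Implicit Arguments.
Unset Strict Implicit.
Unset Printing Implicit Defensive.

Import Order.TTheory GRing.Theory Num.Theory.
Local Open Scope ring_scope.

Record pref (V : finType) := Pref {
  prel : rel V;                       (* prel x y : x strictly preferred to y *)
  prel_irr : irreflexive prel;
  prel_trans : transitive prel;
  prel_total : forall x y, x != y -> prel x y || prel y x }.

Definition is_top (V : finType) (th : pref V) (v : V) : Prop :=
  forall w, w != v -> prel th v w.

Inductive decision (V : Type) := Decide of V | DecideTop.
Arguments DecideTop {V}.

Section Model.
Variables (n : nat) (M : Type) (V : finType).

(* one round's messages, indexed by the other agent (recipient when sending,
   sender when receiving); None = no message *)
Definition msgs := 'I_n -> option M.
(* output: messages to send next round, decision (None = bottom) *)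
Definition out := (msgs * option (decision V))%type.
(* behaviour of an agent once its type is fixed:
   (round r, messages received in rounds 1..r) |-> output *)
Definition actor := nat -> seq msgs -> out.
Definition strategy := pref V -> actor.
Definition profile := 'I_n -> strategy.

(* F i j k : i's message to j in (paper) round k+1 would be delivered *)
Definition fpattern := 'I_n -> 'I_n -> nat -> bool.

Definition valid_fp (F : fpattern) : Prop :=
  forall i j r, ~~ F i j r -> forall j' r', (r < r')%N -> ~~ F i j' r'.

Definition correct (F : fpattern) (i : 'I_n) : Prop := forall j r, F i j r.

Definition admissible (f : nat) (F : fpattern) : Prop :=
  valid_fp F /\
  exists S : {set 'I_n}, (#|S| <= f)%N /\ forall i, ~ correct F i -> i \in S.

Fixpoint hist (F : fpattern) (A : 'I_n -> actor) (k : nat) : 'I_n -> seq msgs :=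
  match k with
  | 0 => fun _ => [::]
  | k'.+1 => fun i =>
      let h := hist F A k' in
      rcons (h i) (fun j => if F j i k' then (A j k' (h j)).1 i else None)
  end.

Definition output (F : fpattern) (A : 'I_n -> actor) (k : nat) (i : 'I_n) : out :=
  A i k (hist F A k i).

(* i has not crashed in any round before (code) round k, so it still acts
   (computes its round-k messages and its decision) at step k *)
Definition alive (F : fpattern) (i : 'I_n) (k : nat) : Prop :=
  forall j k', (k' < k)%N -> F i j k'.

Definition decides (F : fpattern) (A : 'I_n -> actor) (i : 'I_n)
  (d : decision V) : Prop :=
  exists k, alive F i k /\ (output F A k i).2 = Some d /\
    forall k', (k' < k)%N -> (output F A k' i).2 = None.

Definition consensus (F : fpattern) (th : 'I_n -> pref V) (A : 'I_n -> actor) : Prop :=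
  [/\ forall i, correct F i -> exists d, decides F A i d,
      forall i j d d', decides F A i d -> decides F A j d' -> d = d' &
      forall i d, decides F A i d ->
        exists v, d = Decide v /\ exists j, is_top (th j) v].

Definition honest (s : profile) (th : 'I_n -> pref V) : 'I_n -> actor :=
  fun i => s i (th i).

Definition legal (f : nat) (s : profile) : Prop :=
  forall F th, admissible f F -> consensus F th (honest s th).

Inductive xutil (R : Type) := NegInf | Fin of R.

Definition xlt (R : numDomainType) (a b : xutil R) : bool :=
  match a, b with
  | NegInf, Fin _ => true
  | Fin x, Fin y => x < y
  | _, _ => false
  end.

Definition util_ok (R : numDomainType) (u : 'I_n -> pref V -> V -> R) : Prop :=
  (forall i th d, 0 < u i th d) /\
  (forall i th d d', prel th d d' -> u i th d' < u i th d).

Definition util_is (R : numDomainType) (u : 'I_n -> pref V -> V -> R)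
  (F : fpattern) (th : 'I_n -> pref V) (A : 'I_n -> actor) (i : 'I_n)
  (x : xutil R) : Prop :=
  (~ correct F i /\ x = Fin 0) \/
  (correct F i /\ consensus F th A /\
     exists d, decides F A i (Decide d) /\ x = Fin (u i (th i) d)) \/
  (correct F i /\ ~ consensus F th A /\ x = @NegInf R).

Definition gains (R : numDomainType) (u : 'I_n -> pref V -> V -> R)
  (F : fpattern) (th : 'I_n -> pref V) (i : 'I_n) (A' A : 'I_n -> actor) : Prop :=
  exists x' x, util_is u F th A' i x' /\ util_is u F th A i x /\ xlt x x'.

(* colluders' strategies may depend on all colluders' types *)
Definition cstrategy := 'I_n -> ('I_n -> pref V) -> actor.

Definition only_C (C : {set 'I_n}) (s' : cstrategy) : Prop :=
  forall i th th', (forall j, j \in C -> th j = th' j) ->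
    forall r h, s' i th r h = s' i th' r h.

Definition deviate (s : profile) (C : {set 'I_n}) (s' : cstrategy)
  (th : 'I_n -> pref V) : 'I_n -> actor :=
  fun i => if i \in C then s' i th else s i (th i).

(* weakened manipulation: requirement (a) (legality of the deviation) dropped *)
Definition weak_manipulable (R : numDomainType) (u : 'I_n -> pref V -> V -> R)
  (f : nat) (s : profile) (C : {set 'I_n}) : Prop :=
  exists s' : cstrategy, only_C C s' /\
  exists F th, admissible f F /\
    (exists v, forall j, j \in C -> is_top (th j) v) /\
    exists i, i \in C /\ gains u F th i (deviate s C s' th) (honest s th).

Definition weak_resilient (R : numDomainType) (u : 'I_n -> pref V -> V -> R)
  (c f : nat) (s : profile) : Prop :=
  legal f s /\ forall C : {set 'I_n}, (#|C| <= c)%N -> ~ weak_manipulable u f s C.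

End Model.

(* Main.v *)
Set Warnings "-notation-overridden,-ambiguous-paths,-notation-incompatible-prefix".
Require Import Defs.
From mathcomp Require Import all_boot all_order all_algebra.
From mathcomp Require Import zify.
From Stdlib Require Import FunctionalExtensionality.
Set Implicit Arguments. Unset Strict Implicit. Unset Printing Implicit Defensive.

Lemma top_unique (V : finType) (th : pref V) v w :
  is_top th v -> is_top th w -> v = w.
Proof.
move=> Hv Hw; case: (eqVneq v w) => // Hne.
have h1 := Hw v Hne; have h2 : prel th v w by apply: Hv; rewrite eq_sym.
  by have := prel_trans h1 h2; rewrite prel_irr.
Qed.

Lemma top_exists (V : finType) (th : pref V) (v0 : V) : exists v, is_top th v.
Proof.
case: (@arg_maxnP V v0 predT (fun v => #|[pred w | prel th v w]|) isT) => v _ Hmax.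
exists v => w Hw.
case/orP: (prel_total th Hw) => // Hwv.
have : #|[pred z | prel th v z]| < #|[pred z | prel th w z]|.
  apply: proper_card; apply/properP; split.
    by apply/subsetP => z; rewrite !inE => Hz; apply: prel_trans Hwv Hz.
  by exists v; rewrite !inE ?prel_irr.
by move=> Hlt; move: (Hmax w isT); rewrite /= leqNgt Hlt.
Qed.

Definition topkey (V : finType) (a : V) (x : V) : nat :=
  if x == a then 0 else (enum_rank x).+1.

Lemma topkey_inj (V : finType) (a : V) : injective (topkey a).
Proof.
move=> x y; rewrite /topkey.
case: (eqVneq x a) => [->|Hx]; case: (eqVneq y a) => [->|Hy] //.
by case=> /val_inj /enum_rank_inj.
Qed.

Definition mkpref (V : finType) (a : V) : pref V.
Proof.
refine (@Pref V (fun x y => topkey a x < topkey a y) _ _ _).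
- by move=> x; rewrite ltnn.
- by move=> x y z; apply: ltn_trans.
- move=> x y Hxy /=; rewrite -neq_ltn; apply/eqP => H.
  by move/eqP: Hxy; apply; apply: topkey_inj H.
Defined.

Lemma mkpref_top (V : finType) (a : V) : is_top (mkpref a) a.
Proof. by move=> w Hw; rewrite /= /topkey eqxx (negbTE Hw). Qed.

Lemma hist_sim (n : nat) (M : Type) (V : finType) (F1 F2 : fpattern n)
  (A B : 'I_n -> actor n M V) (x : 'I_n) :
  (forall p q k, q != x -> F1 p q k = F2 p q k) ->
  (forall i, i != x -> B i = A i) ->
  (forall k h, B x k h = output F2 A k x) ->
  forall k p, output F1 B k p = output F2 A k p.
Proof.
move=> HF HB HBx.
have H : forall k y, y != x -> hist F1 B k y = hist F2 A k y.
  elim=> [|k IH] y Hy //=.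
  rewrite IH //; congr rcons; apply: functional_extensionality => p.
  rewrite HF //; case: (eqVneq p x) => [->|Hp].
    by rewrite HBx.
  by rewrite HB // IH.
move=> k p; rewrite /output; case: (eqVneq p x) => [->|Hp].
  by rewrite HBx.
by rewrite HB // H.
Qed.

Lemma decides_sim (n : nat) (M : Type) (V : finType) (F1 F2 : fpattern n)
  (A B : 'I_n -> actor n M V) (y : 'I_n) d :
  (forall k, output F1 B k y = output F2 A k y) ->
  (forall k, alive F1 y k -> alive F2 y k) ->
  decides F1 B y d -> decides F2 A y d.
Proof.
move=> Ho Ha [k [Hal [Hk Hb]]]; exists k; split; first exact: Ha.
split; first by rewrite -Ho.
by move=> k' Hk'; rewrite -Ho; apply: Hb.
Qed.

Lemma decides_uniq (n : nat) (M : Type) (V : finType) (F : fpattern n)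
  (A : 'I_n -> actor n M V) (y : 'I_n) d d' :
  decides F A y d -> decides F A y d' -> d = d'.
Proof.
move=> [k [_ [Hk Hb]]] [k' [_ [Hk' Hb']]].
case: (ltngtP k k') => H.
- by move: (Hb' _ H); rewrite Hk.
- by move: (Hb _ H); rewrite Hk'.
- by subst k'; move: Hk'; rewrite Hk => -[].
Qed.

Lemma consensus_sim (n : nat) (M : Type) (V : finType) (F1 F2 : fpattern n)
  (A B : 'I_n -> actor n M V) th :
  (forall k p, output F1 B k p = output F2 A k p) ->
  (forall y k, alive F1 y k <-> alive F2 y k) ->
  (forall y, correct F1 y <-> correct F2 y) ->
  consensus F2 th A -> consensus F1 th B.
Proof.
move=> Ho Ha Hc [Ht Hag Hv].
have D1 : forall y d, decides F1 B y d -> decides F2 A y d.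
  move=> y d; apply: decides_sim; first by move=> k; apply: Ho.
  by move=> k; case: (Ha y k).
have D2 : forall y d, decides F2 A y d -> decides F1 B y d.
  move=> y d; apply: decides_sim; first by move=> k; rewrite Ho.
  by move=> k; case: (Ha y k).
split.
- by move=> i /Hc /Ht [d Hd]; exists d; apply: D2.
- by move=> i j d d' /D1 H1 /D1 H2; apply: Hag H1 H2.
- by move=> i d /D1; apply: Hv.
Qed.

Definition idx (n : nat) (j q : 'I_n) : nat :=
  if q == j then n.-1 else if (q < j)%N then (q : nat) else (q : nat).-1.

Lemma idx_lt n (j q : 'I_n) : (idx j q < n)%N.
Proof.
rewrite /idx; have Hq := ltn_ord q; have Hj := ltn_ord j.
case: (q == j); first lia.
case: (q < j)%N; lia.
Qed.

Lemma idx_jj n (j : 'I_n) : idx j j = n.-1.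
Proof. by rewrite /idx eqxx. Qed.

Lemma idx_ne n (j q : 'I_n) : q != j -> (idx j q < n.-1)%N.
Proof.
move=> Hqj; have Hn : (q : nat) != j by [].
rewrite /idx (negbTE Hqj); have := ltn_ord q; have := ltn_ord j.
case: (ltnP q j) => H; lia.
Qed.

Definition Qp n (j : 'I_n) (t : nat) : fpattern n :=
  fun p q k => if p == j then (k * n + idx j q < t)%N else true.

Lemma Qp_valid n (j : 'I_n) t : valid_fp (Qp j t).
Proof.
move=> p q r; rewrite /Qp; case: (p == j) => // H q' r' Hr.
have := idx_lt j q; have := idx_lt j q'.
have : (r.+1 * n <= r' * n)%N by rewrite leq_mul2r Hr orbT.
move: H; rewrite mulSn; lia.
Qed.

Lemma Qp_correct n (j : 'I_n) t i : i != j -> correct (Qp j t) i.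
Proof. by move=> H q k; rewrite /Qp (negbTE H). Qed.

Lemma Qp_notcorrect n (j : 'I_n) t : ~ correct (Qp j t) j.
Proof.
move=> /(_ j t); rewrite /Qp eqxx idx_jj.
have := ltn_ord j; have : (t <= t * n)%N by rewrite leq_pmulr //; case: (n) j => // -[].
lia.
Qed.

Lemma Qp_adm n (j : 'I_n) t f : (1 <= f)%N -> admissible f (Qp j t).
Proof.
move=> Hf; split; first exact: Qp_valid.
exists [set j]; rewrite cards1; split => // i Hi.
rewrite inE; apply/negPn/negP => H; apply: Hi; exact: Qp_correct.
Qed.

Lemma Qp_alive_j n (j : 'I_n) t k : alive (Qp j t) j k <-> (k * n <= t)%N.
Proof.
have Hn := ltn_ord j.
split.
- case: k => [|k] H; first by rewrite mul0n.
  move: (H j k (ltnSn k)); rewrite /Qp eqxx idx_jj mulSn; lia.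
- move=> H q k' Hk; rewrite /Qp eqxx.
  have := idx_lt j q.
  have : (k'.+1 * n <= k * n)%N by rewrite leq_mul2r Hk orbT.
  rewrite mulSn; lia.
Qed.

Lemma Qp_alive_other n (j : 'I_n) t i k : i != j -> alive (Qp j t) i k.
Proof. by move=> H q k' _; rewrite /Qp (negbTE H). Qed.

Lemma idx_inj n (j q q' : 'I_n) : idx j q = idx j q' -> q = q'.
Proof.
move=> E; apply: val_inj; move: E; rewrite /idx -!(inj_eq val_inj) /=.
have := ltn_ord q; have := ltn_ord q'; have := ltn_ord j.
case: (eqVneq (q : nat) j) => H1; case: (eqVneq (q' : nat) j) => H2;
  case: (ltnP q j) => H3; case: (ltnP q' j) => H4; lia.
Qed.

Lemma idx_surj n (j : 'I_n) m : (m < n)%N -> exists q, idx j q = m.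
Proof.
move=> Hm; have Hj := ltn_ord j.
case: (eqVneq m n.-1) => [->|Hm1]; first by exists j; rewrite idx_jj.
case: (ltnP m j) => Hmj.
- exists (Ordinal Hm); rewrite /idx -(inj_eq val_inj) /= Hmj.
  by have -> : (m == j) = false by apply/eqP; lia.
- have Hm' : (m.+1 < n)%N by lia.
  exists (Ordinal Hm'); rewrite /idx -(inj_eq val_inj) /=.
  have -> : (m.+1 == j) = false by apply/eqP; lia.
  by have -> : (m.+1 < j)%N = false by apply/negbTE; rewrite -leqNgt; lia.
Qed.

Lemma Qp_slot n (j : 'I_n) t : exists r x, t = (r * n + idx j x)%N.
Proof.
have Hn : (0 < n)%N by case: (n) j => // -[].
have [x Hx] := idx_surj j (ltn_pmod t Hn).
by exists (t %/ n), x; rewrite Hx -divn_eq.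
Qed.

Lemma Qp_step n (j : 'I_n) t r x : t = (r * n + idx j x)%N ->
  forall p q k, q != x -> Qp j t p q k = Qp j t.+1 p q k.
Proof.
move=> Ht p q k Hq; rewrite /Qp; case: (p == j) => //.
rewrite [in RHS]ltnS [in RHS]leq_eqVlt; case: eqP => //= E.
exfalso; move/eqP: Hq; apply; apply: (@idx_inj n j).
have := congr1 (modn^~ n) E; rewrite Ht /= !modnMDl !modn_small //; apply: idx_lt.
Qed.

Lemma Qp_step' n (j : 'I_n) t r x : t = (r * n + idx j x)%N ->
  forall p q k, (q != x) || (k != r) -> Qp j t p q k = Qp j t.+1 p q k.
Proof.
move=> Ht p q k Hq; rewrite /Qp; case: (p == j) => //.
rewrite [in RHS]ltnS [in RHS]leq_eqVlt; case: eqP => //= E.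
have Hi : idx j q = idx j x.
  have := congr1 (modn^~ n) E; rewrite Ht /= !modnMDl !modn_small //; apply: idx_lt.
have Hqx := idx_inj Hi; subst q.
move: E; rewrite Ht => /addIn /eqP; rewrite eqn_pmul2r; last by case: (n) j {Ht Hq Hi} => // -[].
by move/eqP => Ek; move: Hq; rewrite Ek !eqxx.
Qed.

Lemma hist_self n M V (F1 F2 : fpattern n) (A : 'I_n -> actor n M V) (j : 'I_n) r :
  (forall p q k, [|| p != j, q != j | k != r] -> F1 p q k = F2 p q k) ->
  (forall q k, q != j -> F2 j q k -> (k <= r)%N) ->
  forall k y, (y != j) || (k <= r)%N -> hist F1 A k y = hist F2 A k y.
Proof.
move=> HF Hr; elim=> [|k IH] y Hy //=.
have Hy' : (y != j) || (k <= r)%N by case/orP: Hy => [->//|H]; rewrite (ltnW H) orbT.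
rewrite IH //; congr rcons; apply: functional_extensionality => p.
have -> : F1 p y k = F2 p y k.
  apply: HF; case/orP: Hy => [->|H]; first by rewrite orbT.
  by rewrite neq_ltn H !orbT.
case E: (F2 p y k) => //; rewrite IH //.
case: (eqVneq p j) => [Hp|//]; subst p; rewrite /=.
case/orP: Hy => [Hy|Hy]; first exact: Hr Hy E.
exact: ltnW.
Qed.

Lemma hist_silent n M V (F : fpattern n) (A B : 'I_n -> actor n M V) (j : 'I_n) :
  (forall q k, F j q k = false) -> (forall i, i != j -> A i = B i) ->
  forall k y, hist F A k y = hist F B k y.
Proof.
move=> HF HAB; elim=> [|k IH] y //=.
rewrite IH; congr rcons; apply: functional_extensionality => p.
case: (eqVneq p j) => [->|Hp]; first by rewrite HF.
by rewrite HAB // IH.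
Qed.

Lemma hist_prefix n M V (F1 F2 : fpattern n) (A : 'I_n -> actor n M V) K :
  (forall p q k, (k < K)%N -> F1 p q k = F2 p q k) ->
  forall k y, (k <= K)%N -> hist F1 A k y = hist F2 A k y.
Proof.
move=> HF; elim=> [|k IH] y Hk //=.
rewrite IH ?(ltnW Hk) //; congr rcons; apply: functional_extensionality => p.
by rewrite HF // IH // ltnW.
Qed.

Definition outv n M (V : finType) (s : profile n M V) (F : fpattern n) th (d : V) :=
  exists y, correct F y /\ decides F (honest s th) y (Decide d).

Lemma out_dec n M (V : finType) f (s : profile n M V) F th x d :
  legal f s -> admissible f F -> correct F x -> outv s F th d ->
  decides F (honest s th) x (Decide d).
Proof.
move=> Hleg Had Hx [y [Hy Hd]]; have [Ht Hag _] := Hleg F th Had.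
have [d0 Hd0] := Ht x Hx; by rewrite -(Hag _ _ _ _ Hd0 Hd).
Qed.

Lemma out_ex n M (V : finType) f (s : profile n M V) F th x :
  legal f s -> admissible f F -> correct F x -> exists d, outv s F th d.
Proof.
move=> Hleg Had Hx; have [Ht _ Hv] := Hleg F th Had.
have [d0 Hd0] := Ht x Hx; have [v [Ev _]] := Hv _ _ Hd0.
by subst d0; exists v, x.
Qed.

Lemma out_uniq n M (V : finType) f (s : profile n M V) F th d d' :
  legal f s -> admissible f F -> outv s F th d -> outv s F th d' -> d = d'.
Proof.
move=> Hleg Had [y [_ Hy]] [z [_ Hz]]; have [_ Hag _] := Hleg F th Had.
by case: (Hag _ _ _ _ Hy Hz).
Qed.

Lemma no_gain (V : finType) (n c f : nat) (M : Type) (R : realFieldType)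
  (u : 'I_n -> pref V -> V -> R) (s : profile n M V) :
  legal f s -> (1 <= c)%N -> util_ok u ->
  (forall C : {set 'I_n}, (#|C| <= c)%N -> ~ weak_manipulable u f s C) ->
  forall x F1 F2 th d1 d2,
  admissible f F1 -> admissible f F2 ->
  (forall p q k, q != x -> F1 p q k = F2 p q k) ->
  (forall y k, alive F1 y k <-> alive F2 y k) ->
  (forall y, correct F1 y <-> correct F2 y) ->
  correct F1 x ->
  decides F1 (honest s th) x (Decide d1) -> decides F2 (honest s th) x (Decide d2) ->
  ~ prel (th x) d2 d1.
Proof.
move=> Hleg Hc Hu Hnm x F1 F2 th d1 d2 Had1 Had2 HF Ha Hcor Hx Hd1 Hd2 Hpref.
apply: (Hnm [set x]); first by rewrite cards1.
pose dev : actor n M V := fun k _ => output F2 (honest s th) k x.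
exists (fun _ _ => dev); split; first by [].
exists F1, th; split => //; split.
  have [v Hv] := top_exists (th x) d1.
  by exists v => j; rewrite inE => /eqP ->.
exists x; split; first by rewrite inE.
set B := deviate s [set x] (fun _ _ => dev) th.
have Ho : forall k p, output F1 B k p = output F2 (honest s th) k p.
  apply: (hist_sim HF).
  - by move=> i Hi; rewrite /B /deviate inE (negbTE Hi).
  - by move=> k h; rewrite /B /deviate inE eqxx.
have Hcons := consensus_sim Ho Ha Hcor (Hleg F2 th Had2).
exists (Fin (u x (th x) d2)), (Fin (u x (th x) d1)); split.
  right; left; split => //; split => //; exists d2; split => //.
  apply: (decides_sim (F1 := F2) (B := honest s th)) Hd2 => k.
    by rewrite Ho.
  by case: (Ha x k).
split; last by rewrite /=; apply: (proj2 Hu).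
right; left; split => //; split; [exact: Hleg | by exists d1].
Qed.

Lemma other_agent n (j : 'I_n) : (2 <= n)%N -> exists i : 'I_n, i != j.
Proof.
move=> Hn; have H0 : (0 < n)%N by lia.
have H1 : (1 < n)%N by lia.
case: (eqVneq (Ordinal H0) j) => [E|E]; last by exists (Ordinal H0).
by exists (Ordinal H1); rewrite -E.
Qed.

Lemma step1 (V : finType) (n c f : nat) (M : Type) (R : realFieldType)
  (u : 'I_n -> pref V -> V -> R) (s : profile n M V) :
  (2 <= n)%N -> (1 <= f)%N ->
  legal f s -> (1 <= c)%N -> util_ok u ->
  (forall C : {set 'I_n}, (#|C| <= c)%N -> ~ weak_manipulable u f s C) ->
  forall j th t d1 d2, outv s (Qp j t) th d1 -> outv s (Qp j t.+1) th d2 -> d1 = d2.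
Proof.
move=> Hn Hf Hleg Hc Hu Hnm j th t d1 d2 H1 H2.
have [r [x Ht]] := Qp_slot j t.
have Had1 := Qp_adm j t Hf; have Had2 := Qp_adm j t.+1 Hf.
have Hn0 : (0 < n)%N by lia.
case: (eqVneq x j) => [Exj | Hxj].
- subst x; have [i Hi] := other_agent j Hn.
  have Hd1 := out_dec Hleg Had1 (Qp_correct t Hi) H1.
  have Hd2 := out_dec Hleg Had2 (Qp_correct t.+1 Hi) H2.
  have Hh : forall k, hist (Qp j t) (honest s th) k i = hist (Qp j t.+1) (honest s th) k i.
    move=> k; apply: (@hist_self _ _ _ _ _ _ j r); last by rewrite Hi.
    + move=> p q k'; case: (eqVneq p j) => [Ep|Ep] /= Hc'.
        by apply: (Qp_step' Ht).
      by rewrite /Qp (negbTE Ep).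
    + move=> q k' Hq; rewrite /Qp eqxx Ht idx_jj.
      have := idx_ne Hq; move=> Hiq Hlt.
      rewrite leqNgt; apply/negP => Hk.
      have : (r.+1 * n <= k' * n)%N by rewrite leq_mul2r Hk orbT.
      move: Hlt; rewrite mulSn; lia.
  have : decides (Qp j t) (honest s th) i (Decide d2).
    apply: (decides_sim (F1 := Qp j t.+1) (B := honest s th)) Hd2 => k.
      by rewrite /output Hh.
    by move=> _; apply: Qp_alive_other.
  by move=> Hd2'; have := decides_uniq Hd1 Hd2' => -[].
- have Ha : forall y k, alive (Qp j t) y k <-> alive (Qp j t.+1) y k.
    move=> y k; case: (eqVneq y j) => [->|Hy]; last first.
      by split => _; apply: Qp_alive_other.
    rewrite !Qp_alive_j; split => Hk; first by lia.
    have Hix := idx_ne Hxj.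
    have : (k * n < r.+1 * n)%N by rewrite mulSn; lia.
    rewrite ltn_pmul2r // => Hkr.
    have : (k * n <= r * n)%N by rewrite leq_mul2r -ltnS Hkr orbT.
    lia.
  have Hcor : forall y, correct (Qp j t) y <-> correct (Qp j t.+1) y.
    move=> y; case: (eqVneq y j) => [->|Hy]; last by split => _; apply: Qp_correct.
    by split => H; exfalso; apply: Qp_notcorrect H.
  case: (eqVneq d1 d2) => // Hne.
  have Hd1 := out_dec Hleg Had1 (Qp_correct t Hxj) H1.
  have Hd2 := out_dec Hleg Had2 (Qp_correct t.+1 Hxj) H2.
  have HF := Qp_step Ht.
  case/orP: (prel_total (th x) Hne) => H.
  + exfalso; apply: (no_gain Hleg Hc Hu Hnm (x := x) (F1 := Qp j t.+1) (F2 := Qp j t)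
       Had2 Had1 _ _ _ _ Hd2 Hd1 H).
    * by move=> p q k Hq; rewrite HF.
    * by move=> y k; split; case: (Ha y k).
    * by move=> y; split; case: (Hcor y).
    * exact: Qp_correct.
  + exfalso; apply: (no_gain Hleg Hc Hu Hnm (x := x) (F1 := Qp j t) (F2 := Qp j t.+1)
       Had1 Had2 HF Ha Hcor _ Hd1 Hd2 H).
    exact: Qp_correct.
Qed.

Definition F0 n : fpattern n := fun _ _ _ => true.
Arguments F0 n : clear implicits.

Lemma F0_adm n f : admissible f (F0 n).
Proof.
split; first by move=> i j r.
by exists set0; rewrite cards0; split => // i Hi; exfalso; apply: Hi.
Qed.

Lemma F0_correct n (i : 'I_n) : correct (F0 n) i.
Proof. by []. Qed.

Lemma step2 n M (V : finType) f (s : profile n M V) :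
  (2 <= n)%N -> (1 <= f)%N -> legal f s ->
  forall j th th' d d', (forall y, y != j -> th y = th' y) ->
  outv s (Qp j 0) th d -> outv s (Qp j 0) th' d' -> d = d'.
Proof.
move=> Hn Hf Hleg j th th' d d' Hth H1 H2.
have [i Hi] := other_agent j Hn.
have Had := Qp_adm j 0 Hf.
have Hd := out_dec Hleg Had (Qp_correct 0 Hi) H1.
have Hd' := out_dec Hleg Had (Qp_correct 0 Hi) H2.
have Hh := @hist_silent _ _ _ (Qp j 0) (honest s th) (honest s th') j.
have : decides (Qp j 0) (honest s th) i (Decide d').
  apply: (decides_sim (F1 := Qp j 0) (B := honest s th')) Hd' => k.
    rewrite /output Hh //.
    - by rewrite /honest Hth.
    - by move=> q k'; rewrite /Qp eqxx.
    - by move=> y Hy; rewrite /honest Hth.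
  by [].
by move=> H; have := decides_uniq Hd H => -[].
Qed.

Lemma chain (V : finType) (n c f : nat) (M : Type) (R : realFieldType)
  (u : 'I_n -> pref V -> V -> R) (s : profile n M V) :
  (2 <= n)%N -> (1 <= f)%N ->
  legal f s -> (1 <= c)%N -> util_ok u ->
  (forall C : {set 'I_n}, (#|C| <= c)%N -> ~ weak_manipulable u f s C) ->
  forall j th t d1 d2, outv s (Qp j 0) th d1 -> outv s (Qp j t) th d2 -> d1 = d2.
Proof.
move=> Hn Hf Hleg Hc Hu Hnm j th; elim=> [|t IH] d1 d2 H1 H2.
  exact: (out_uniq Hleg (Qp_adm j 0 Hf) H1 H2).
have [i Hi] := other_agent j Hn.
have [e He] := out_ex th Hleg (Qp_adm j t Hf) (Qp_correct t Hi).
rewrite (IH _ _ H1 He).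
exact: (step1 Hn Hf Hleg Hc Hu Hnm He H2).
Qed.

Lemma step3 n M (V : finType) f (s : profile n M V) :
  (2 <= n)%N -> legal f s ->
  forall j th d, outv s (F0 n) th d -> exists t, outv s (Qp j t) th d.
Proof.
move=> Hn Hleg j th d H.
have [i Hi] := other_agent j Hn.
have [k [_ [Hk Hb]]] := out_dec Hleg (F0_adm n f) (F0_correct i) H.
have Hpre : forall k' y, (k' <= k)%N ->
    hist (Qp j (k * n)) (honest s th) k' y = hist (F0 n) (honest s th) k' y.
  apply: hist_prefix => p q k' Hk'; rewrite /Qp /F0; case: (p == j) => //.
  have := idx_lt j q.
  have : (k'.+1 * n <= k * n)%N by rewrite leq_mul2r Hk' orbT.
  rewrite mulSn; lia.
exists (k * n), i; split; first exact: Qp_correct.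
exists k; split; first exact: Qp_alive_other.
split; first by rewrite /output Hpre; [exact: Hk | exact: leqnn].
move=> k' Hk'; rewrite /output Hpre; [exact: Hb | exact: ltnW].
Qed.

Lemma single (V : finType) (n c f : nat) (M : Type) (R : realFieldType)
  (u : 'I_n -> pref V -> V -> R) (s : profile n M V) :
  (2 <= n)%N -> (1 <= f)%N ->
  legal f s -> (1 <= c)%N -> util_ok u ->
  (forall C : {set 'I_n}, (#|C| <= c)%N -> ~ weak_manipulable u f s C) ->
  forall j th th' d d', (forall y, y != j -> th y = th' y) ->
  outv s (F0 n) th d -> outv s (F0 n) th' d' -> d = d'.
Proof.
move=> Hn Hf Hleg Hc Hu Hnm j th th' d d' Hth H1 H2.
have [t Ht] := step3 Hn Hleg j H1.
have [t' Ht'] := step3 Hn Hleg j H2.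
have [i Hi] := other_agent j Hn.
have [e He] := out_ex th Hleg (Qp_adm j 0 Hf) (Qp_correct 0 Hi).
have [e' He'] := out_ex th' Hleg (Qp_adm j 0 Hf) (Qp_correct 0 Hi).
rewrite -(chain Hn Hf Hleg Hc Hu Hnm He Ht) -(chain Hn Hf Hleg Hc Hu Hnm He' Ht').
exact: (step2 Hn Hf Hleg Hth He He').
Qed.

Lemma proposition2_core (V : finType) (n c f : nat) (M : Type) (R : realFieldType)
  (u : 'I_n -> pref V -> V -> R) (s : profile n M V) :
  (2 <= n)%N -> (1 <= f)%N ->
  legal f s -> (1 <= c)%N -> util_ok u ->
  (forall C : {set 'I_n}, (#|C| <= c)%N -> ~ weak_manipulable u f s C) ->
  forall th th' d d', outv s (F0 n) th d -> outv s (F0 n) th' d' -> d = d'.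
Proof.
move=> Hn Hf Hleg Hc Hu Hnm th th' d d' H1 H2.
have Hn0 : (0 < n)%N by lia.
pose thm m := fun y : 'I_n => if (y < m)%N then th' y else th y.
have Hm : forall m e, outv s (F0 n) (thm m) e -> d = e.
  elim=> [|m IH] e He.
    have E : thm 0 = th by apply: functional_extensionality.
    by rewrite E in He; exact: (out_uniq Hleg (F0_adm n f) H1 He).
  have [e0 He0] := out_ex (thm m) Hleg (F0_adm n f) (F0_correct (Ordinal Hn0)).
  rewrite (IH _ He0).
  case: (ltnP m n) => Hmn.
  - apply: (single Hn Hf Hleg Hc Hu Hnm (j := Ordinal Hmn)) He0 He => y Hy.
    have Hyn : (y : nat) != m by apply: contra Hy => /eqP E; apply/eqP; apply: val_inj.
    rewrite /thm; case: (ltnP y m) => H.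
      by have -> : (y < m.+1)%N by lia.
    by have -> : (y < m.+1)%N = false by apply/negbTE; rewrite -leqNgt; lia.
  - apply: (single Hn Hf Hleg Hc Hu Hnm (j := Ordinal Hn0)) He0 He => y _.
    have Hy := ltn_ord y.
    rewrite /thm; have -> : (y < m)%N by lia.
    by have -> : (y < m.+1)%N by lia.
have E : thm n = th' by apply: functional_extensionality => y; rewrite /thm ltn_ord.
by apply: (Hm n); rewrite E.
Qed.

Theorem proposition2 (V : finType) (n c f : nat) (M : Type)
  (R : realFieldType) (u : 'I_n -> pref V -> V -> R) :
  (3 <= #|V|)%N -> (2 <= n)%N -> (1 <= c)%N -> (1 <= f)%N ->
  util_ok u ->
  forall s : profile n M V, ~ weak_resilient u c f s.
Proof.
move=> HV Hn Hc Hf Hu s [Hleg Hnm].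
have HV' : (1 < #|V|)%N by lia.
have [a [b [_ _ Hab]]] := card_gt1P HV'.
have Hn0 : (0 < n)%N by lia.
have Hx : forall (v : V), exists d, outv s (F0 n) (fun _ => mkpref v) d /\ d = v.
  move=> v.
  have [d Hd] := out_ex (fun _ => mkpref v) Hleg (F0_adm n f) (F0_correct (Ordinal Hn0)).
  exists d; split => //.
  case: Hd => [y [_ Hy]]; have [_ _ Hv] := Hleg _ (fun _ => mkpref v) (F0_adm n f).
  have [w [[Ew] [j Hj]]] := Hv _ _ Hy; subst w.
  move: Hj => /= Hj.
  apply: (top_unique Hj); exact: mkpref_top.
have [da [Ha Ea]] := Hx a; have [db [Hb Eb]] := Hx b.
have := proposition2_core Hn Hf Hleg Hc Hu Hnm Ha Hb.
by move=> E; move/eqP: Hab; apply; rewrite -Ea -Eb.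
Qed.
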